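(* Let $G$ be a graph (the similarity graph) on the vertex set $\{\mathbf{y}_1,\dots,\mathbf{y}_n\}$ of a sequence of observations, identified with the index set $\{1,\dots,n\}$, with edge set also denoted $G$. Work under the permutation null distribution, which places probability $1/n!$ on each of the $n!$ orderings of the observations (the graph $G$ is held fixed; only the time-indices of the observations are permuted); $\mathbf{E}$, $\mathbf{Var}$, $\mathbf{Cov}$ denote moments under this distribution. (Single change-point.) For $1\le t<n$ let $R_1(t)$ be the number of edges of $G$ joining two observations with indices $\le t$, and $R_2(t)$ the number of edges joining two observations with indices $>t$. Let $\Sigma(t)$ be the covariance matrix of $(R_1(t),R_2(t))^T$ under the permutation null (assumed invertible), and $$S(t)=\begin{pmatrix}R_1(t)-\mathbf{E}R_1(t)\\ R_2(t)-\mathbf{E}R_2(t)\end{pmatrix}^T\Sigma(t)^{-1}\begin{pmatrix}R_1(t)-\mathbf{E}R_1(t)\\ R_2(t)-\mathbf{E}R_2(t)\end{pmatrix}.$$ With $p(t)=\frac{t-1}{n-2}$, $q(t)=1-p(t)$, let $R_w(t)=q(t)R_1(t)+p(t)R_2(t)$ and $R_{\mathrm{diff}}(t)=R_1(t)-R_2(t)$, and let $Z_w(t)=\frac{R_w(t)-\mathbf{E}R_w(t)}{\sqrt{\mathbf{Var}R_w(t)}}$, $Z_{\mathrm{diff}}(t)=\frac{R_{\mathrm{diff}}(t)-\mathbf{E}R_{\mathrm{diff}}(t)}{\sqrt{\mathbf{Var}R_{\mathrm{diff}}(t)}}$ (variances assumed positive). Then $$S(t)=Z_w^2(t)+Z_{\mathrm{diff}}^2(t).$$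 (Changed interval.) For $1\le t_1<t_2\le n$ with $m=t_2-t_1$, let $R_1(t_1,t_2)$ be the number of edges of $G$ joining two observations with indices outside $(t_1,t_2]$, and $R_2(t_1,t_2)$ the number of edges joining two observations with indices in $(t_1,t_2]$. Define $S(t_1,t_2)$ as the same quadratic form in $(R_1(t_1,t_2)-\mathbf{E}R_1(t_1,t_2),\,R_2(t_1,t_2)-\mathbf{E}R_2(t_1,t_2))$ with the inverse of their permutation-null covariance matrix; let $R_w(t_1,t_2)=\frac{m-1}{n-2}R_1(t_1,t_2)+\frac{n-m-1}{n-2}R_2(t_1,t_2)$, $R_{\mathrm{diff}}(t_1,t_2)=R_1(t_1,t_2)-R_2(t_1,t_2)$, and $Z_w(t_1,t_2)$, $Z_{\mathrm{diff}}(t_1,t_2)$ their standardizations by permutation-null mean and standard deviation. Then $$S(t_1,t_2)=Z_w^2(t_1,t_2)+Z_{\mathrm{diff}}^2(t_1,t_2).$$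
   Context: The weighted statistic weights each within-group edge count by (size of the other group $-1$)$/(n-2)$; in the single change-point case the group before $t$ has size $t$ and the group after has size $n-t$. *)

(* Defs.v *)
From HB Require Import structures.
From mathcomp Require Import all_boot all_order all_algebra all_fingroup.
Set Implicit Arguments. Unset Strict Implicit. Unset Printing Implicit Defensive.
Import Order.TTheory GRing.Theory Num.Theory.
Local Open Scope ring_scope.

(* Observations are the vertices 'I_n of the similarity graph e (a simple
   graph: symmetric irreflexive relation).  A permutation s : {perm 'I_n}
   assigns to observation i the time index (s i).+1 in {1,..,n}, i.e. the
   0-based time s i. *)

Section Defs.
Variable R : rcfType.
Variable n : nat.

Definition Eperm (X : {perm 'I_n} -> R) : R :=
  (\sum_(s : {perm 'I_n}) X s) / (n`!)%:R.
Definition Covp (X Y : {perm 'I_n} -> R) : R :=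
  Eperm (fun s => (X s - Eperm X) * (Y s - Eperm Y)).
Definition Varp (X : {perm 'I_n} -> R) : R := Covp X X.
Definition Zstd (X : {perm 'I_n} -> R) (s : {perm 'I_n}) : R :=
  (X s - Eperm X) / Num.sqrt (Varp X).

Definition Redges (e : rel 'I_n) (P : nat -> bool) (s : {perm 'I_n}) : R :=
  (#|[set p : 'I_n * 'I_n | [&& (p.1 < p.2)%N, e p.1 p.2, P (s p.1) & P (s p.2)]]|)%:R.

Definition pairF (X Y : {perm 'I_n} -> R) (i : 'I_2) : {perm 'I_n} -> R :=
  if i == ord0 then X else Y.
Definition Cov2 (X Y : {perm 'I_n} -> R) : 'M[R]_2 :=
  \matrix_(i < 2, j < 2) Covp (pairF X Y i) (pairF X Y j).
Definition Sstat (X Y : {perm 'I_n} -> R) (s : {perm 'I_n}) : R :=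
  let d : 'rV[R]_2 := \row_(i < 2) (pairF X Y i s - Eperm (pairF X Y i)) in
  (d *m invmx (Cov2 X Y) *m d^T) ord0 ord0.

(* single change-point, t in 1..n-1 (1-based) *)
Definition R1 (e : rel 'I_n) (t : nat) := Redges e (fun k => (k < t)%N).
Definition R2 (e : rel 'I_n) (t : nat) := Redges e (fun k => (t <= k)%N).
(* changed interval (t1, t2] (1-based), i.e. 0-based times t1 <= k < t2 *)
Definition R1i (e : rel 'I_n) (t1 t2 : nat) :=
  Redges e (fun k => ~~ ((t1 <= k)%N && (k < t2)%N)).
Definition R2i (e : rel 'I_n) (t1 t2 : nat) :=
  Redges e (fun k => (t1 <= k)%N && (k < t2)%N).
End Defs.

(* Main.v *)
Require Import Defs.
From HB Require Import structures.
From mathcomp Require Import all_boot all_order all_algebra all_fingroup.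
From mathcomp.algebra_tactics Require Import ring lra.
From mathcomp Require Import zify.
Set Implicit Arguments. Unset Strict Implicit. Unset Printing Implicit Defensive.
Import Order.TTheory GRing.Theory Num.Theory.
Local Open Scope ring_scope.

Section Moments.
Variable R : rcfType.
Variable n : nat.
Local Notation E := (@Eperm R n).
Local Notation Cov := (@Covp R n).

Lemma nfact_neq0 : (n`!)%:R != 0 :> R.
Proof. by rewrite pnatr_eq0 -lt0n fact_gt0. Qed.

Lemma E_ext f g : f =1 g -> E f = E g.
Proof. by move=> fg; rewrite /Eperm; congr (_ / _); apply: eq_bigr. Qed.

Lemma E_const c : E (fun _ => c) = c.
Proof.
rewrite /Eperm sumr_const card_Sn -[c *+ _]mulr_natr mulfK //; exact: nfact_neq0.
Qed.

Lemma E_add f g : E (fun s => f s + g s) = E f + E g.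
Proof. by rewrite /Eperm big_split /= mulrDl. Qed.

Lemma E_scale c f : E (fun s => c * f s) = c * E f.
Proof. by rewrite /Eperm -mulr_sumr mulrA. Qed.

Lemma E_sum (I : finType) (F : I -> {perm 'I_n} -> R) :
  E (fun s => \sum_i F i s) = \sum_i E (F i).
Proof. by rewrite /Eperm exchange_big /= mulr_suml. Qed.

Lemma Cov_formula f g : Cov f g = E (fun s => f s * g s) - E f * E g.
Proof.
rewrite /Covp.
rewrite (@E_ext _ (fun s => (f s * g s + (- E g) * f s) + ((- E f) * g s + E f * E g))); last first.
  by move=> s /=; ring.
rewrite !E_add !E_scale E_const -/(Eperm g); ring.
Qed.

Lemma Cov_ext f f' g g' : f =1 f' -> g =1 g' -> Cov f g = Cov f' g'.
Proof.
move=> ff gg; rewrite !Cov_formula (E_ext ff) (E_ext gg).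
by congr (_ - _); apply: E_ext => s; rewrite ff gg.
Qed.

Lemma Cov_sym f g : Cov f g = Cov g f.
Proof. rewrite !Cov_formula mulrC; congr (_ - _); apply: E_ext => s; exact: mulrC. Qed.

Lemma Cov_lin f g h a b c :
  Cov (fun s => a * f s + b * g s + c) h = a * Cov f h + b * Cov g h.
Proof.
rewrite !Cov_formula.
rewrite (@E_ext _ (fun s => a * (f s * h s) + b * (g s * h s) + c * h s)); last first.
  by move=> s /=; ring.
by rewrite !E_add !E_scale E_const; ring.
Qed.

Lemma Cov_suml (I : finType) (F : I -> {perm 'I_n} -> R) h :
  Cov (fun s => \sum_i F i s) h = \sum_i Cov (F i) h.
Proof.
rewrite Cov_formula (@E_ext _ (fun s => \sum_i (F i s * h s))); last first.
  by move=> s; rewrite mulr_suml.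
rewrite !E_sum mulr_suml -sumrB; apply: eq_bigr => i _; by rewrite Cov_formula.
Qed.

Lemma Cov_sumr (I : finType) (F : I -> {perm 'I_n} -> R) h :
  Cov h (fun s => \sum_i F i s) = \sum_i Cov h (F i).
Proof. by rewrite Cov_sym Cov_suml; apply: eq_bigr => i _; rewrite Cov_sym. Qed.

Lemma Cov_scalel c f h : Cov (fun s => c * f s) h = c * Cov f h.
Proof.
rewrite (@Cov_ext _ (fun s => c * f s + 0 * f s + 0) _ h) //; last by move=> s; ring.
by rewrite Cov_lin; ring.
Qed.

Lemma Cov_scaler c f h : Cov h (fun s => c * f s) = c * Cov h f.
Proof. by rewrite Cov_sym Cov_scalel Cov_sym. Qed.

Lemma Cov_constl c h : Cov (fun _ => c) h = 0.
Proof.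
rewrite Cov_formula E_scale E_const; exact: subrr.
Qed.

Lemma E_perm (r : {perm 'I_n}) f : E f = E (fun s => f (r * s)%g).
Proof. by rewrite /Eperm (reindex_inj (mulgI r)). Qed.

End Moments.

Section Comb.
Variable R : rcfType.
Variable n : nat.
Variable e : rel 'I_n.
Hypothesis e_sym : symmetric e.
Hypothesis e_irr : irreflexive e.
Local Notation E := (@Eperm R n).
Local Notation Cov := (@Covp R n).

Definition ee i j : R := (e i j)%:R.
Definition X (P : nat -> bool) (k : 'I_n) (s : {perm 'I_n}) : R := (P (s k))%:R.
Definition T P s := \sum_i \sum_j ee i j * (X P i s * X P j s).
Definition d k := \sum_j ee k j.
Definition L P s := \sum_k d k * X P k s.
Definition S1 := \sum_k d k.

Lemma ee_sym i j : ee i j = ee j i.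
Proof. by rewrite /ee e_sym. Qed.

Lemma ee_diag i : ee i i = 0.
Proof. by rewrite /ee e_irr. Qed.

Lemma Redges_half P s :
  Redges R e P s = \sum_(i : 'I_n) \sum_(j : 'I_n) ((i < j)%N)%:R * (ee i j * (X P i s * X P j s)).
Proof.
rewrite /Redges -sum1_card big_mkcond /= natr_sum pair_bigA /=.
apply: eq_bigr => -[i j] _.
rewrite inE /= /ee /X.
by case: (i < j)%N; case: (e i j); case: (P (s i)); case: (P (s j)); rewrite /= ?(mul0r, mulr0, mul1r, mulr1).
Qed.

Lemma Redges_T P s : Redges R e P s = T P s / 2.
Proof.
rewrite Redges_half /T.
have -> : \sum_i \sum_j ee i j * (X P i s * X P j s) =
  \sum_(i : 'I_n) \sum_(j : 'I_n) ((i < j)%N)%:R * (ee i j * (X P i s * X P j s)) +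
  \sum_(i : 'I_n) \sum_(j : 'I_n) ((j < i)%N)%:R * (ee i j * (X P i s * X P j s)).
  rewrite -big_split; apply: eq_bigr => i _; rewrite -big_split; apply: eq_bigr => j _ /=.
  case: (ltngtP i j) => [h|h|h]; rewrite /=.
  - by rewrite mul1r mul0r addr0.
  - by rewrite mul1r mul0r add0r.
  - have -> : i = j by apply: val_inj.
    by rewrite ee_diag !mul0r addr0.
rewrite [X in _ + X]exchange_big /=.
have -> : \sum_(j : 'I_n) \sum_(i : 'I_n) ((j < i)%N)%:R * (ee i j * (X P i s * X P j s)) =
  \sum_(i : 'I_n) \sum_(j : 'I_n) ((i < j)%N)%:R * (ee i j * (X P i s * X P j s)) :> R.
  apply: eq_bigr => i _; apply: eq_bigr => j _.
  by rewrite ee_sym [X P j s * _]mulrC.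
have h2 : (2 : R) != 0 by rewrite pnatr_eq0.
by rewrite -mulr2n -[_ *+ 2]mulr_natr mulfK.
Qed.


Lemma X_compl P k s : X (fun x => ~~ P x) k s = 1 - X P k s.
Proof. by rewrite /X; case: (P _); rewrite ?subrr ?subr0. Qed.

Lemma X_sq P k s : X P k s * X P k s = X P k s.
Proof. by rewrite /X; case: (P _); rewrite ?mul0r ?mul1r. Qed.

Lemma X_perm P k (r s : {perm 'I_n}) : X P k (r * s)%g = X P (r k) s.
Proof. by rewrite /X permM. Qed.

Lemma sum_pick (F : 'I_n -> R) i : \sum_k F k * (k == i)%:R = F i.
Proof.
rewrite (bigD1 i) //= eqxx mulr1 big1 ?addr0 // => k /negbTE ->; exact: mulr0.
Qed.

Lemma T_compl P s : T (fun x => ~~ P x) s = T P s - 2 * L P s + S1.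
Proof.
rewrite /T /L /S1 /d.
have -> : \sum_i \sum_j ee i j * (X (fun x => ~~ P x) i s * X (fun x => ~~ P x) j s) =
   \sum_i \sum_j ee i j * (X P i s * X P j s) - \sum_i \sum_j ee i j * X P i s
   - \sum_i \sum_j ee i j * X P j s + \sum_i \sum_j ee i j.
  rewrite -!sumrB -big_split /=; apply: eq_bigr => i _.
  rewrite -!sumrB -big_split /=; apply: eq_bigr => j _.
  rewrite !X_compl; ring.
have -> : \sum_i \sum_j ee i j * X P j s = \sum_i \sum_j ee i j * X P i s.
  rewrite exchange_big /=; apply: eq_bigr => i _; apply: eq_bigr => j _.
  by rewrite ee_sym.
have -> : \sum_i \sum_j ee i j * X P i s = \sum_k (\sum_j ee k j) * X P k s.
  by apply: eq_bigr => i _; rewrite mulr_suml.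
ring.
Qed.

Definition a (P : nat -> bool) : R := \sum_(x : 'I_n) (P x)%:R.

Lemma sumX P s : \sum_k X P k s = a P.
Proof. by rewrite /a [RHS](reindex_inj (@perm_inj _ s)). Qed.

Definition m1 P i := E (X P i).
Definition m2 P i j := E (fun s => X P i s * X P j s).
Definition m3 P i j k := E (fun s => X P i s * X P j s * X P k s).

Lemma m1_eq P i : m1 P i * n%:R = a P.
Proof.
have h : forall k, m1 P k = m1 P i.
  move=> k; rewrite /m1 (E_perm (tperm k i)).
  by apply: E_ext => s; rewrite X_perm tpermL.
have := @E_sum R n _ (fun k s => X P k s).
rewrite (@E_ext _ _ _ (fun _ => a P)); last by move=> s; exact: sumX.
rewrite E_const => ->.
rewrite (eq_bigr (fun _ => m1 P i)); last by move=> k _; exact: h.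
by rewrite sumr_const card_ord mulr_natr.
Qed.


Lemma m2_eq P i j : i != j -> m2 P i j * (n%:R - 1) = (a P - 1) * m1 P i.
Proof.
move=> ij.
have h : forall k, m2 P i k = m2 P i j + (k == i)%:R * (m1 P i - m2 P i j).
  move=> k; case: (eqVneq k i) => [->|ki].
    rewrite mul1r addrC subrK /m2 /m1; apply: E_ext => s; exact: X_sq.
  rewrite mul0r addr0; case: (eqVneq k j) => [->//|kj].
  rewrite /m2 (E_perm (tperm j k)); apply: E_ext => s.
  by rewrite !X_perm tpermR tpermD // eq_sym.
have hs : \sum_k m2 P i k = a P * m1 P i.
  rewrite /m2 -E_sum (@E_ext _ _ _ (fun s => a P * X P i s)); first by rewrite E_scale.
  by move=> s; rewrite -mulr_sumr sumX mulrC.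
move: hs; rewrite (eq_bigr _ (fun k _ => h k)) big_split /= sumr_const card_ord.
rewrite (eq_bigr (fun k => (m1 P i - m2 P i j) * (k == i)%:R)); last by move=> k _; rewrite mulrC.
rewrite sum_pick -mulr_natr => hs; lra.
Qed.

Lemma m3_eq P i j k : i != j -> i != k -> j != k ->
  m3 P i j k * (n%:R - 2) = (a P - 2) * m2 P i j.
Proof.
move=> ij ik jk.
have h : forall l, m3 P i j l = m3 P i j k + ((l == i)%:R + (l == j)%:R) * (m2 P i j - m3 P i j k).
  move=> l; case: (eqVneq l i) => [->|li].
    rewrite (negbTE ij) addr0 mul1r addrC subrK /m3 /m2; apply: E_ext => s.
    by rewrite mulrAC X_sq.
  case: (eqVneq l j) => [->|lj].
    rewrite add0r mul1r addrC subrK /m3 /m2; apply: E_ext => s.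
    by rewrite -mulrA X_sq.
  rewrite addr0 mul0r addr0; case: (eqVneq l k) => [->//|lk].
  rewrite /m3 (E_perm (tperm k l)); apply: E_ext => s.
  have ki : k != i by rewrite eq_sym.
  have kj : k != j by rewrite eq_sym.
  by rewrite !X_perm tpermR !tpermD.
have hs : \sum_l m3 P i j l = a P * m2 P i j.
  rewrite /m3 -E_sum (@E_ext _ _ _ (fun s => a P * (X P i s * X P j s))); first by rewrite E_scale.
  by move=> s; rewrite -mulr_sumr sumX mulrC.
move: hs; rewrite (eq_bigr _ (fun l _ => h l)) big_split /= sumr_const card_ord.
rewrite (eq_bigr (fun l => (m2 P i j - m3 P i j k) * (l == i)%:R + (m2 P i j - m3 P i j k) * (l == j)%:R)); last by move=> l _; rewrite mulrC mulrDr.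
rewrite big_split /= !sum_pick -mulr_natr => hs; lra.
Qed.


Definition mu P := a P / n%:R.
Definition del P := mu P * (a P - 1) / (n%:R - 1).
Definition gam P := del P * (a P - 2) / (n%:R - 2).
Definition D2 := \sum_k d k * d k.

Lemma m1_val P i : m1 P i = mu P.
Proof.
have n0 : n%:R != 0 :> R.
  by rewrite pnatr_eq0 -lt0n; exact: (leq_ltn_trans (leq0n i) (ltn_ord i)).
by rewrite /mu -(m1_eq P i) mulfK.
Qed.

Lemma m2_val P i j : i != j -> m2 P i j = del P.
Proof.
move=> ij.
have n1 : n%:R - 1 != 0 :> R.
  rewrite subr_eq0 (_ : 1 = 1%:R) // eqr_nat.
  have := ltn_ord i; have := ltn_ord j; have : (i : nat) != j by []. lia.
by rewrite /del -(m1_val P i) [m1 P i * _]mulrC -(m2_eq P ij) mulfK.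
Qed.

Lemma m3_val P i j k : i != j -> i != k -> j != k -> m3 P i j k = gam P.
Proof.
move=> ij ik jk.
have n2 : n%:R - 2 != 0 :> R.
  rewrite subr_eq0 eqr_nat.
  have := ltn_ord i; have := ltn_ord j; have := ltn_ord k.
  have : (i : nat) != j by []. have : (i : nat) != k by []. have : (j : nat) != k by []. lia.
by rewrite /gam -(m2_val P ij) [m2 P i j * _]mulrC -(m3_eq P ij ik jk) mulfK.
Qed.


Lemma sum_ee_d i : \sum_j ee i j = d i.
Proof. by []. Qed.

Lemma S1_ee : \sum_i \sum_j ee i j = S1.
Proof. by []. Qed.

Lemma sum_lin (F : 'I_n -> R) c c' k :
  \sum_l F l * (c + c' * (l == k)%:R) = c * \sum_l F l + c' * F k.
Proof.
rewrite (eq_bigr (fun l => c * F l + c' * (F l * (l == k)%:R))); last by move=> l _; ring.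
by rewrite big_split /= -!mulr_sumr sum_pick.
Qed.

Lemma sum_lin2 (F G : 'I_n -> R) c c' :
  \sum_l F l * (c + c' * G l) = c * \sum_l F l + c' * \sum_l F l * G l.
Proof.
rewrite (eq_bigr (fun l => c * F l + c' * (F l * G l))); last by move=> l _; ring.
by rewrite big_split /= -!mulr_sumr.
Qed.

Lemma Cov_XX P k l : Cov (fun s => X P k s) (fun s => X P l s) =
   (del P - mu P ^+ 2) + (mu P - del P) * (l == k)%:R.
Proof.
rewrite Cov_formula.
case: (eqVneq l k) => [->|lk].
  rewrite (@E_ext _ _ _ (X P k)); last by move=> s; exact: X_sq.
  rewrite -/(m1 P k) m1_val /=; ring.
have -> : E (fun s => X P k s * X P l s) = m2 P k l by [].
rewrite m2_val 1?eq_sym // -/(m1 P k) -/(m1 P l) !m1_val /=; ring.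
Qed.

Lemma Var_L P : Cov (L P) (L P) = (del P - mu P ^+ 2) * S1 ^+ 2 + (mu P - del P) * D2.
Proof.
rewrite /L Cov_suml.
under eq_bigr => k _ do rewrite Cov_scalel Cov_sumr.
under eq_bigr => k _ do under eq_bigr => l _ do rewrite Cov_scaler Cov_XX.
under eq_bigr => k _ do rewrite sum_lin -/S1.
rewrite sum_lin2 -/S1 -/D2; ring.
Qed.


Lemma Cov_XXX P i j k : i != j ->
  Cov (fun s => X P i s * X P j s) (fun s => X P k s) =
  (gam P - del P * mu P) + (del P - gam P) * ((k == i)%:R + (k == j)%:R).
Proof.
move=> ij; rewrite Cov_formula.
have -> : E (fun s => X P i s * X P j s * X P k s) = m3 P i j k by [].
have -> : E (fun s => X P i s * X P j s) = m2 P i j by [].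
rewrite -/(m1 P k) m1_val m2_val //.
case: (eqVneq k i) => [->|ki].
  have -> : m3 P i j i = m2 P i j.
    rewrite /m3 /m2; apply: E_ext => s; by rewrite mulrAC X_sq.
  have -> : (i == j) = false by exact: negbTE ij.
  rewrite m2_val // /=; ring.
case: (eqVneq k j) => [->|kj].
  have -> : m3 P i j j = m2 P i j.
    rewrite /m3 /m2; apply: E_ext => s; by rewrite -mulrA X_sq.
  rewrite m2_val //= ; ring.
have ik : i != k by rewrite eq_sym.
have jk : j != k by rewrite eq_sym.
rewrite m3_val //=; ring.
Qed.

Lemma sum_ee_di : \sum_i \sum_j ee i j * d i = D2.
Proof. by apply: eq_bigr => i _; rewrite -mulr_suml mulrC. Qed.

Lemma sum_ee_dj : \sum_i \sum_j ee i j * d j = D2.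
Proof.
rewrite exchange_big; apply: eq_bigr => j _ /=.
rewrite -mulr_suml mulrC /d; congr (_ * _); apply: eq_bigr => i _; exact: ee_sym.
Qed.

Lemma Cov_TL P : Cov (T P) (L P) =
  (gam P - del P * mu P) * S1 ^+ 2 + 2 * (del P - gam P) * D2.
Proof.
rewrite /T /L Cov_suml.
under eq_bigr => i _ do rewrite Cov_suml.
under eq_bigr => i _ do under eq_bigr => j _ do rewrite Cov_scalel Cov_sumr.
have key : forall i j, ee i j * \sum_k Cov (fun s => X P i s * X P j s) (fun s => d k * X P k s)
   = (gam P - del P * mu P) * S1 * ee i j + (del P - gam P) * (ee i j * d i + ee i j * d j).
  move=> i j; rewrite /ee; case: (boolP (e i j)) => eij; last by rewrite /= !mul0r; ring.
  have ij : i != j by apply: contraTneq eij => ->; rewrite e_irr.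
  under eq_bigr => k _ do rewrite Cov_scaler Cov_XXX //.
  rewrite sum_lin2 -/S1.
  rewrite (eq_bigr (fun k => d k * (k == i)%:R + d k * (k == j)%:R)); last by move=> k _; rewrite mulrDr.
  rewrite big_split /= !sum_pick /=; ring.
under eq_bigr => i _ do under eq_bigr => j _ do rewrite key.
rewrite (eq_bigr (fun i => (gam P - del P * mu P) * S1 * \sum_j ee i j + (del P - gam P) * (\sum_j ee i j * d i + \sum_j ee i j * d j))); last first.
  by move=> i _; rewrite big_split /= -!mulr_sumr big_split.
rewrite big_split /= -!mulr_sumr big_split /= sum_ee_di sum_ee_dj S1_ee; ring.
Qed.


Lemma n_facts : (2 < n)%N ->
  [/\ n%:R != 0 :> R, n%:R - 1 != 0 :> R & n%:R - 2 != 0 :> R].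
Proof.
move=> hn; split.
- by rewrite pnatr_eq0; lia.
- by rewrite subr_eq0 (_ : 1 = 1%:R) // eqr_nat; lia.
- by rewrite subr_eq0 eqr_nat; lia.
Qed.

Lemma Cov_w_d P u v (f1 f2 : {perm 'I_n} -> R) :
  (forall s, f1 s = Redges R e P s) ->
  (forall s, f2 s = Redges R e (fun k => ~~ P k) s) ->
  (2 < n)%N -> v * (n%:R - 2) = a P - 1 -> u + v = 1 ->
  Cov (fun s => u * f1 s + v * f2 s) (fun s => f1 s - f2 s) = 0.
Proof.
move=> h1 h2 hn hv huv.
have hf : forall s, f2 s = f1 s - L P s + S1 / 2.
  move=> s; rewrite h1 h2 !Redges_T T_compl.
  have h2n : (2 : R) != 0 by rewrite pnatr_eq0.
  by field.
rewrite (@Cov_ext _ _ _ (fun s => ((u + v) / 2) * T P s + (- v) * L P s + v * S1 / 2)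
   _ (fun s => 0 * T P s + 1 * L P s + (- (S1 / 2)))); last first.
- by move=> s; rewrite hf h1 Redges_T; ring.
- by move=> s; rewrite hf h1 Redges_T; ring.
rewrite Cov_lin [Cov (T P) _]Cov_sym [Cov (L P) _]Cov_sym !Cov_lin.
rewrite [Cov (L P) (T P)]Cov_sym Cov_TL Var_L.
have [n0 n1 n2] := n_facts hn.
have -> : u = 1 - v by rewrite -huv; ring.
have -> : v = (a P - 1) / (n%:R - 2) by rewrite -hv mulfK.
rewrite /gam /del /mu.
field.
by rewrite n0 n1 n2.
Qed.

End Comb.

Section Alg.
Variable R : rcfType.
Variable n : nat.
Local Notation E := (@Eperm R n).
Local Notation Cov := (@Covp R n).

Lemma Cov_bil (f1 f2 : {perm 'I_n} -> R) a b c d :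
  Cov (fun s => a * f1 s + b * f2 s) (fun s => c * f1 s + d * f2 s) =
  a * c * Cov f1 f1 + (a * d + b * c) * Cov f1 f2 + b * d * Cov f2 f2.
Proof.
rewrite (@Cov_ext _ _ _ (fun s => a * f1 s + b * f2 s + 0) (fun s => c * f1 s + d * f2 s)
   (fun s => c * f1 s + d * f2 s)) //; last by move=> s; rewrite addr0.
rewrite Cov_lin.
rewrite (@Cov_ext _ _ f1 f1 _ (fun s => c * f1 s + d * f2 s + 0)) //; last by move=> s; rewrite addr0.
rewrite (@Cov_ext _ _ f2 f2 _ (fun s => c * f1 s + d * f2 s + 0)) //; last by move=> s; rewrite addr0.
rewrite [Cov f1 _]Cov_sym [Cov f2 _]Cov_sym !Cov_lin [Cov f2 f1]Cov_sym; ring.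
Qed.

Lemma Sstat_eq (f1 f2 : {perm 'I_n} -> R) u v s :
  u + v = 1 ->
  Cov (fun s => u * f1 s + v * f2 s) (fun s => f1 s - f2 s) = 0 ->
  Cov2 f1 f2 \in unitmx ->
  0 < Varp (fun s => u * f1 s + v * f2 s) ->
  0 < Varp (fun s => f1 s - f2 s) ->
  Sstat f1 f2 s = Zstd (fun s => u * f1 s + v * f2 s) s ^+ 2
                + Zstd (fun s => f1 s - f2 s) s ^+ 2.
Proof.
move=> huv hK hU hW hD.
have eD : forall s, f1 s - f2 s = 1 * f1 s + (-1) * f2 s by move=> s'; ring.
rewrite /Varp in hW hD.
rewrite /Zstd /Varp.
rewrite (@Cov_ext _ _ (fun s => f1 s - f2 s) (fun s => 1 * f1 s + (-1) * f2 s)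
   (fun s => f1 s - f2 s) (fun s => 1 * f1 s + (-1) * f2 s)) // in hD *.
rewrite (@Cov_ext _ _ _ (fun s => u * f1 s + v * f2 s)
   (fun s => f1 s - f2 s) (fun s => 1 * f1 s + (-1) * f2 s)) // in hK.
rewrite !Cov_bil in hK hW hD *.
have EN : E (fun s => - f2 s) = - E f2.
  by rewrite (@E_ext _ _ _ (fun s => (-1) * f2 s)) ?E_scale ?mulN1r // => s'; rewrite mulN1r.
rewrite !(E_add, E_scale) EN !expr_div_n !sqr_sqrtr ?ltW //.
set A := Cov f1 f1 in hK hW hD *; set B := Cov f1 f2 in hK hW hD *.
set C := Cov f2 f2 in hK hW hD *.
have BA : Cov f2 f1 = B by rewrite /B Cov_sym.
set M := Cov2 f1 f2 in hU *.
have Me : forall i j : 'I_2, M i j = if i == ord0 then (if j == ord0 then A else B) else (if j == ord0 then B else C).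
  move=> i j; rewrite /M /Cov2 mxE /pairF.
  by case: (i == ord0); case: (j == ord0).
have detM : \det M = A * C - B * B.
  rewrite (expand_det_row M ord0) !big_ord_recl big_ord0 /cofactor !det_mx11 !mxE /pairF /= BA -/A -/B -/C expr0 expr1; ring.
have det0 : A * C - B * B != 0 by rewrite -detM -unitfE -unitmxE.
set D0 := A * C - B * B in det0 detM.
pose Minv : 'M[R]_2 := \matrix_(i < 2, j < 2)
  ((if i == ord0 then (if j == ord0 then C else - B) else (if j == ord0 then - B else A)) / D0).
have hMM : M *m Minv = 1%:M.
  apply/matrixP => i j; rewrite !mxE !big_ord_recl big_ord0 !mxE /pairF.
  case: i => [[|[|//]] Hi]; case: j => [[|[|//]] Hj] /=; rewrite -/A -/B -/C ?BA -/B;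
    by rewrite /D0; field.
have hinv : invmx M = Minv.
  by rewrite -[invmx M]mulmx1 -hMM mulmxA mulVmx // mul1mx.
rewrite /Sstat -/M hinv !mxE !big_ord_recl !big_ord0 !mxE /pairF /=.
rewrite !big_ord_recl !big_ord0 !mxE /=.
set VW := u * u * A + (u * v + v * u) * B + v * v * C.
set VD := 1 * 1 * A + (1 * -1 + -1 * 1) * B + -1 * -1 * C.
have VW0 : VW != 0 by rewrite gt_eqF.
have VD0 : VD != 0 by rewrite gt_eqF.
set K := u * 1 * A + (u * -1 + v * 1) * B + v * -1 * C in hK.
have id1 : VW * VD = (u + v) ^+ 2 * D0 + K ^+ 2 by rewrite /VW /VD /K /D0; ring.
rewrite hK huv expr1n mul1r expr0n /= addr0 in id1.
have id2 : forall d1 d2, (u * d1 + v * d2) ^+ 2 * VD + (d1 - d2) ^+ 2 * VW =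
    (u + v) ^+ 2 * (C * d1 ^+ 2 - 2 * B * d1 * d2 + A * d2 ^+ 2) + 2 * K * (u * d1 + v * d2) * (d1 - d2).
  by move=> d1 d2; rewrite /VW /VD /K; ring.
have -> : u * f1 s + v * f2 s - (u * E f1 + v * E f2) = u * (f1 s - E f1) + v * (f2 s - E f2) by ring.
have -> : f1 s - f2 s - (E f1 - E f2) = (f1 s - E f1) - (f2 s - E f2) by ring.
move: id2; set d1 := f1 s - E f1; set d2 := f2 s - E f2 => id2.
have -> : (u * d1 + v * d2) ^+ 2 / VW + (d1 - d2) ^+ 2 / VD =
   ((u * d1 + v * d2) ^+ 2 * VD + (d1 - d2) ^+ 2 * VW) / (VW * VD) by field; rewrite VW0 VD0.
rewrite id2 hK huv id1 expr1n mul1r mulr0 mul0r addr0.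
rewrite /D0 in det0 *; field. all: by [].
Qed.
End Alg.

Lemma cnt_lt n t : (\sum_(i < n) ((i < t)%N : nat) = minn n t)%N.
Proof.
elim: n => [|n IH]; first by rewrite big_ord0 min0n.
rewrite big_ord_recr /= IH; case: (ltnP n t) => h /=; lia.
Qed.

Lemma cnt_in n t1 t2 :
  (\sum_(i < n) (((t1 <= i) && (i < t2))%N : nat) = minn n t2 - minn n t1)%N.
Proof.
elim: n => [|n IH]; first by rewrite big_ord0 !min0n.
rewrite big_ord_recr /= IH; case: (leqP t1 n) => h1; case: (ltnP n t2) => h2 /=; lia.
Qed.

Lemma Redges_ext (R : rcfType) n (e : rel 'I_n) (P Q : nat -> bool) s :
  P =1 Q -> Redges R e P s = Redges R e Q s.
Proof.
move=> PQ; rewrite /Redges; congr (_%:R); apply: eq_card => p; by rewrite !inE !PQ.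
Qed.

Lemma a_lt (R : rcfType) n t : (t <= n)%N -> a R n (fun k => (k < t)%N) = t%:R.
Proof. by move=> h; rewrite /a -natr_sum cnt_lt; congr (_%:R); lia. Qed.

Lemma a_out (R : rcfType) n t1 t2 : (t1 <= t2)%N -> (t2 <= n)%N ->
  a R n (fun k => ~~ ((t1 <= k) && (k < t2))%N) = n%:R - (t2 - t1)%N%:R.
Proof.
move=> h1 h2; rewrite /a.
rewrite (eq_bigr (fun x : 'I_n => 1 - (((t1 <= x) && (x < t2))%N : nat)%:R)); last first.
  by move=> x _; case: (_ && _); rewrite ?subr0 ?subrr.
rewrite big_split /= sumr_const card_ord sumrN -natr_sum cnt_in.
congr (_ - _%:R); lia.
Qed.

Lemma Var_diff_2 (R : rcfType) (e : rel 'I_2) (e_sym : symmetric e) (e_irr : irreflexive e)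
  P (f1 f2 : {perm 'I_2} -> R) :
  (forall s, f1 s = Redges R e P s) ->
  (forall s, f2 s = Redges R e (fun k => ~~ P k) s) ->
  a R 2 P = 1 -> Varp (fun s => f1 s - f2 s) = 0.
Proof.
move=> h1 h2 ha.
rewrite /Varp (@Cov_ext _ _ _ (fun s => 0 * f1 s + 1 * L R e P s + (- (S1 R e / 2)))
   _ (fun s => 0 * f1 s + 1 * L R e P s + (- (S1 R e / 2)))); first last.
- by move=> s; rewrite h1 h2 !(Redges_T _ e_sym e_irr) (T_compl _ e_sym); field.
- by move=> s; rewrite h1 h2 !(Redges_T _ e_sym e_irr) (T_compl _ e_sym); field.
rewrite Cov_lin Cov_sym Cov_lin !mul0r !add0r !mul1r Cov_sym Cov_lin Var_L /del /mu ha.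
rewrite /S1 /D2 /d !big_ord_recl !big_ord0 !ee_diag // (ee_sym _ e_sym (lift ord0 ord0)).
field. all: by [].
Qed.

Theorem lemma1 (R : rcfType) (n : nat) (e : rel 'I_n)
  (e_sym : symmetric e) (e_irr : irreflexive e) :
  (forall t : nat, (1 <= t)%N -> (t < n)%N ->
     let X1 := R1 R e t in
     let X2 := R2 R e t in
     let p : R := (t%:R - 1) / (n%:R - 2) in
     let q : R := 1 - p in
     let Xw := fun s => q * X1 s + p * X2 s in
     let Xd := fun s => X1 s - X2 s in
     Cov2 X1 X2 \in unitmx -> 0 < Varp Xw -> 0 < Varp Xd ->
     forall s : {perm 'I_n},
       Sstat X1 X2 s = Zstd Xw s ^+ 2 + Zstd Xd s ^+ 2)
  /\
  (forall t1 t2 : nat, (1 <= t1)%N -> (t1 < t2)%N -> (t2 <= n)%N ->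
     let m := (t2 - t1)%N in
     let X1 := R1i R e t1 t2 in
     let X2 := R2i R e t1 t2 in
     let Xw := fun s => (m%:R - 1) / (n%:R - 2) * X1 s
                        + (n%:R - m%:R - 1) / (n%:R - 2) * X2 s in
     let Xd := fun s => X1 s - X2 s in
     Cov2 X1 X2 \in unitmx -> 0 < Varp Xw -> 0 < Varp Xd ->
     forall s : {perm 'I_n},
       Sstat X1 X2 s = Zstd Xw s ^+ 2 + Zstd Xd s ^+ 2).
Proof.
split.
- move=> t ht1 htn X1 X2 p q Xw Xd hU hW hD s.
  have h1 : forall s, X1 s = Redges R e (fun k => (k < t)%N) s by [].
  have h2 : forall s, X2 s = Redges R e (fun k => ~~ (k < t)%N) s.
    by move=> s'; apply: Redges_ext => k; rewrite -leqNgt.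
  have ha := @a_lt R n t (ltnW htn).
  have [n2|n3] : n = 2%N \/ (2 < n)%N by lia.
    exfalso; subst n.
    have t1 : t = 1%N by lia.
    have ha1 : a R 2 (fun k => (k < t)%N) = 1 by rewrite ha t1.
    have := Var_diff_2 e_sym e_irr h1 h2 ha1.
    by rewrite -/Xd => h; rewrite h ltxx in hD.
  have [n0 n1 n2] := n_facts R n3.
  have huv : q + p = 1 by rewrite /q; ring.
  have hv : p * (n%:R - 2) = a R n (fun k => (k < t)%N) - 1 by rewrite ha /p mulfVK.
  have hK := Cov_w_d e_sym e_irr h1 h2 n3 hv huv.
  exact: (@Sstat_eq R n X1 X2 q p s huv hK hU hW hD).
- move=> t1 t2 ht1 ht12 ht2n m X1 X2 Xw Xd hU hW hD s.
  pose P := fun k => ~~ ((t1 <= k) && (k < t2))%N.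
  have h1 : forall s, X1 s = Redges R e P s by [].
  have h2 : forall s, X2 s = Redges R e (fun k => ~~ P k) s.
    by move=> s'; apply: Redges_ext => k; rewrite /P negbK.
  have ha := @a_out R n t1 t2 (ltnW ht12) ht2n.
  have [n2|n3] : n = 2%N \/ (2 < n)%N by lia.
    exfalso; subst n.
    have e1 : t1 = 1%N by lia.
    have e2 : t2 = 2%N by lia.
    have ha1 : a R 2 P = 1 by rewrite /P ha e1 e2 /= mulr2n addrK.
    have := Var_diff_2 e_sym e_irr h1 h2 ha1.
    by rewrite -/Xd => h; rewrite h ltxx in hD.
  have [n0 n1 n2] := n_facts R n3.
  have huv : (m%:R - 1) / (n%:R - 2) + (n%:R - m%:R - 1) / (n%:R - 2) = 1 :> R.
    by field.
  have hv : (n%:R - m%:R - 1) / (n%:R - 2) * (n%:R - 2) = a R n P - 1.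
    by rewrite /P ha mulfVK.
  have hK := Cov_w_d e_sym e_irr h1 h2 n3 hv huv.
  exact: (@Sstat_eq R n X1 X2 _ _ s huv hK hU hW hD).
Qed.
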